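(* Let $\delta\in(0,1)$, $t\ge0$ and $\boldsymbol{x}\in\mathcal{X}$. Then, with probability at least $1-\delta$ (with respect to $f_t$ distributed as the Gaussian process posterior), $$|p_{t,\boldsymbol{x}}-\mu_t^{(p)}(\boldsymbol{x})|<\delta^{-1/2}\gamma_t(\boldsymbol{x}).$$
   Context: $\mathcal{D}\subset\mathbb{R}^d$ is compact, $\mathcal{X}\subset\mathcal{D}$ finite, $h\in\mathbb{R}$ a threshold, and for each $\boldsymbol{x}\in\mathcal{X}$, $g(\cdot\mid\boldsymbol{\theta}_{\boldsymbol{x}})$ is a probability density on $\mathcal{D}$. An unknown $f:\mathcal{D}\to\mathbb{R}$ has Gaussian process prior $\mathcal{GP}(0,k)$ and, after observing data $\{(\boldsymbol{s}_j,y_j)\}_{j=1}^t$ with $y_j=f(\boldsymbol{s}_j)+$ independent $\mathcal{N}(0,\sigma^2)$ noise, $f_t$ denotes a random function distributed according to the GP posterior, with posterior mean $\mu_t$ and variance $\sigma_t^2$. Define $p_{t,\boldsymbol{x}}=\int_{\mathcal{D}}\mathbf{1}[f_t(\boldsymbol{s})<h]\,g(\boldsymbol{s}\mid\boldsymbol{\theta}_{\boldsymbol{x}})\,d\boldsymbol{s}$, $\Phi_{\boldsymbol{s}}=\Phi((h-\mu_t(\boldsymbol{s}))/\sigma_t(\boldsymbol{s}))$ with $\Phi$ the standard normal cdf, $\mu_t^{(p)}(\boldsymbol{x})=\mathbb{E}[p_{t,\boldsymbol{x}}]=\int_{\mathcal{D}}\Phi_{\boldsymbol{s}}\,g(\boldsymbol{s}\mid\boldsymbol{\theta}_{\boldsymbol{x}})d\boldsymbol{s}$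 and $\gamma_t^2(\boldsymbol{x})=\int_{\mathcal{D}}\mathrm{Var}[\mathbf{1}[f_t(\boldsymbol{s})<h]]\,g(\boldsymbol{s}\mid\boldsymbol{\theta}_{\boldsymbol{x}})d\boldsymbol{s}=\int_{\mathcal{D}}\Phi_{\boldsymbol{s}}(1-\Phi_{\boldsymbol{s}})\,g(\boldsymbol{s}\mid\boldsymbol{\theta}_{\boldsymbol{x}})d\boldsymbol{s}$. *)

(* Defs.v *)
From HB Require Import structures.
From mathcomp Require Import all_boot all_order all_algebra.
From mathcomp Require Import all_classical all_reals all_analysis.
Set Implicit Arguments. Unset Strict Implicit. Unset Printing Implicit Defensive.
Import Order.TTheory GRing.Theory Num.Theory.
Local Open Scope classical_set_scope.
Local Open Scope ring_scope.

Definition std_normal_cdf {R : realType} (x : R) : R :=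
  fine (normal_prob 0 1 `]-oo, x]).

(* Y is a (possibly degenerate) Gaussian random variable N(m, v) under P.
   (The library's normal_prob m 0 is not the Dirac mass, so the degenerate
   case v = 0 is spelled out as "Y = m almost surely".) *)
Definition is_gaussian {R : realType} (dO : measure_display)
  (Omega : measurableType dO) (P : probability Omega R)
  (Y : Omega -> R) (m v : R) : Prop :=
  0 <= v /\
  (v = 0 -> P [set w | Y w = m] = 1%E) /\
  (0 < v -> forall A : set R, measurable A ->
      P (Y @^-1` A) = normal_prob m (Num.sqrt v) A).

Definition gram {R : realType} {T : Type} (k : T -> T -> R) (t : nat)
  (s : 'I_t -> T) : 'M[R]_t := \matrix_(i, j) k (s i) (s j).

Definition kvec {R : realType} {T : Type} (k : T -> T -> R) (t : nat)
  (s : 'I_t -> T) (x : T) : 'cV[R]_t := \col_i k (s i) x.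

Definition post_mean {R : realType} {T : Type} (k : T -> T -> R) (sigma : R)
  (t : nat) (s : 'I_t -> T) (y : 'I_t -> R) (x : T) : R :=
  ((kvec k s x)^T *m invmx (gram k s + (sigma ^+ 2)%:M) *m \col_i y i) 0 0.

Definition post_cov {R : realType} {T : Type} (k : T -> T -> R) (sigma : R)
  (t : nat) (s : 'I_t -> T) (x x' : T) : R :=
  k x x' - ((kvec k s x)^T *m invmx (gram k s + (sigma ^+ 2)%:M) *m kvec k s x') 0 0.

Definition post_sd {R : realType} {T : Type} (k : T -> T -> R) (sigma : R)
  (t : nat) (s : 'I_t -> T) (x : T) : R :=
  Num.sqrt (post_cov k sigma s x x).

Definition psd_kernel_on {R : realType} {T : Type} (D : set T)
  (k : T -> T -> R) : Prop :=
  (forall x x', D x -> D x' -> k x x' = k x' x) /\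
  (forall (n : nat) (ss : 'I_n -> T) (a : 'I_n -> R), (forall i, D (ss i)) ->
     0 <= \sum_(i < n) \sum_(j < n) a i * a j * k (ss i) (ss j)).

Definition is_GP {R : realType} (dO : measure_display)
  (Omega : measurableType dO) (P : probability Omega R) {T : Type}
  (D : set T) (F : Omega -> T -> R) (m : T -> R) (c : T -> T -> R) : Prop :=
  forall (n : nat) (ss : 'I_n -> T) (a : 'I_n -> R), (forall i, D (ss i)) ->
    is_gaussian P (fun w => \sum_(i < n) a i * F w (ss i))
      (\sum_(i < n) a i * m (ss i))
      (\sum_(i < n) \sum_(j < n) a i * a j * c (ss i) (ss j)).

Definition Phi_s {R : realType} {T : Type} (k : T -> T -> R) (sigma : R)
  (t : nat) (s : 'I_t -> T) (y : 'I_t -> R) (h : R) (z : T) : R :=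
  std_normal_cdf ((h - post_mean k sigma s y z) / post_sd k sigma s z).

Definition p_tx {R : realType} (d : measure_display) (T : measurableType d)
  (mu : {measure set T -> \bar R}) (D : set T) {Omega : Type}
  (F : Omega -> T -> R) (h : R) (gx : T -> R) (w : Omega) : R :=
  Rintegral mu D (fun z => ((F w z < h)%R%:R : R) * gx z).

Definition mu_p {R : realType} (d : measure_display) (T : measurableType d)
  (mu : {measure set T -> \bar R}) (D : set T) (k : T -> T -> R) (sigma : R)
  (t : nat) (s : 'I_t -> T) (y : 'I_t -> R) (h : R) (gx : T -> R) : R :=
  Rintegral mu D (fun z => Phi_s k sigma s y h z * gx z).

Definition gamma_t {R : realType} (d : measure_display) (T : measurableType d)
  (mu : {measure set T -> \bar R}) (D : set T) (k : T -> T -> R) (sigma : R)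
  (t : nat) (s : 'I_t -> T) (y : 'I_t -> R) (h : R) (gx : T -> R) : R :=
  Num.sqrt (Rintegral mu D (fun z =>
     Phi_s k sigma s y h z * (1 - Phi_s k sigma s y h z) * gx z)).

(* Main.v *)
Require Import Defs.
From HB Require Import structures.
From mathcomp Require Import all_boot all_order all_algebra.
From mathcomp Require Import all_classical all_reals all_analysis.
From mathcomp Require Import ring lra.
From mathcomp Require Import measurable_realfun.
Import Order.TTheory GRing.Theory Num.Theory.
Import numFieldNormedType.Exports.
Local Open Scope classical_set_scope.
Local Open Scope ring_scope.
Section S.
Variable R : realType.
Variables (m sg b : R).
Hypothesis sg0 : 0 < sg.
Let F (u : R) := (u + m / sg) * sg.
Let F'E : F^`()%classic = cst sg.
Proof.
apply/funext => x; rewrite /F derive1E deriveM// deriveD// derive_cst derive_id.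
by rewrite derive_cst scaler0 add0r addr0 scaler1.
Qed.
Lemma pdf_sub u : ((normal_pdf m sg \o F) * F^`()%classic) u = normal_pdf 0 1 u.
Proof.
rewrite F'E /= /normal_pdf gt_eqF// oner_eq0 /normal_peak /normal_fun.
rewrite !fctE /F [in LHS]/=.
have -> : (u + m / sg) * sg - m = u * sg by rewrite mulrDl divfK ?gt_eqF// addrK.
rewrite subr0 expr1n mul1r -mulrnAr sqrtrM ?sqr_ge0// sqrtr_sqr gtr0_norm//.
rewrite exprMn.
have -> : - (u ^+ 2 * sg ^+ 2) / (sg ^+ 2 *+ 2) = - u ^+ 2 / 2.
  by field; rewrite gt_eqF.
have hpi : Num.sqrt (pi *+ 2 : R) != 0 by rewrite gt_eqF// sqrtr_gt0 pmulrn_lgt0// pi_gt0.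
by field; rewrite hpi gt_eqF.
Qed.
Let FbE : F ((b - m) / sg) = b.
Proof. by rewrite /F -mulrDl subrK divfK ?gt_eqF. Qed.

Lemma cdf_shift : normal_prob m sg `]-oo, b[ =
  (fine (normal_prob 0 1 `]-oo, (b - m) / sg]))%:E.
Proof.
rewrite fineK; last first.
  rewrite ge0_fin_numE ?measure_ge0//.
  exact: (le_lt_trans (probability_le1 (normal_prob 0 1) _) (ltry _)).
rewrite /normal_prob integral_itv_bndo_bndc; last first.
  apply/measurable_EFinP; exact: measurable_funTS (measurable_normal_pdf _ _).
have H := @increasing_ge0_integration_by_substitutionNy R F (normal_pdf m sg) ((b - m) / sg).
rewrite FbE in H; apply: eq_trans (H _ _ _ _ _ _ _ _) _; last first.
  by apply: eq_integral => u _; rewrite pdf_sub.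
all: try (by move=> x _; exact: normal_pdf_ge0).
- by apply: continuous_subspaceT; apply: continuous_normal_pdf; rewrite gt_eqF.
- by rewrite /F; apply: gt0_cvgMlNy => //; exact: cvg_addrr_Ny.
- split.
    move=> x _; rewrite /F; apply: derivableM => //; exact: derivableD.
  by apply: cvg_at_left_filter; rewrite /F; apply: cvgM; [apply: cvgD; [exact: cvg_id|exact: cvg_cst]|exact: cvg_cst].
- by rewrite F'E; exact: cvg_cst.
- by rewrite F'E; exact: is_cvg_cst.
- by rewrite F'E => x _; exact: cst_continuous.
- move=> x y _ _ xy; rewrite /F ltr_pM2r// ltrD2r//.
Qed.
End S.

Lemma npos (R : realType) (a : R) : (0 < normal_prob 0 1 `[a, (a + 1)%R])%E.
Proof.
pose e : R := (Num.sqrt (1 ^+ 2 * pi *+ 2))^-1 * expR (- (`|a| + 1) ^+ 2 / (1 ^+ 2 *+ 2)).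
have e0 : 0 < e by rewrite mulr_gt0 ?expR_gt0// invr_gt0 sqrtr_gt0 pmulrn_lgt0// mulr_gt0 ?pi_gt0.
apply: (@lt_le_trans _ _ (e%:E * lebesgue_measure `[a, (a + 1)%R])%E).
  rewrite lebesgue_measure_itv /= lte_fin ltrDl ltr01 -EFinD addrAC subrr add0r mule1.
  by rewrite lte_fin.
rewrite -integral_cst//; apply: ge0_le_integral => //.
- by move=> x _; rewrite lee_fin ltW.
- by apply/measurable_EFinP; exact: measurable_funTS (measurable_normal_pdf _ _).
move=> x; rewrite /= in_itv /= => /andP[ax xa].
rewrite lee_fin /normal_pdf oner_eq0 /e ler_pM2l ?invr_gt0 ?sqrtr_gt0 ?pmulrn_lgt0 ?mulr_gt0 ?pi_gt0//.
rewrite ler_expR subr0 !mulNr lerN2 ler_pM2r ?invr_gt0 ?pmulrn_lgt0 ?expr1n//.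
have h1 := ler_norm a; have h2 : - a <= `|a| by rewrite -normrN ler_norm.
by nra.
Qed.
Lemma Phi01 (R : realType) (u : R) : 0 < std_normal_cdf u < 1.
Proof.
rewrite /std_normal_cdf.
set A : set R := [set` `]-oo, u]].
have mA : measurable A by exact: measurable_itv.
have Afin : (normal_prob 0 1 A : \bar R) \is a fin_num.
  rewrite ge0_fin_numE ?measure_ge0//.
  exact: (le_lt_trans (probability_le1 (normal_prob 0 1) _) (ltry _)).
rewrite -(@lte_fin R) -[X in (_ && X)](@lte_fin R) fineK//.
apply/andP; split.
  apply: (@lt_le_trans _ _ (normal_prob 0 1 `[(u - 1)%R, (u - 1 + 1)%R])); first exact: npos.
  apply: le_measure; rewrite ?inE//.
  by move=> x; rewrite /= !in_itv /= subrK => /andP[_ xu]; rewrite /A /= in_itv /= xu.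
have : (0 < normal_prob 0 1 (~` A))%E.
  apply: (@lt_le_trans _ _ (normal_prob 0 1 `[(u + 1)%R, (u + 1 + 1)%R])); first exact: npos.
  apply: le_measure; rewrite ?inE//.
    exact: measurableC.
  move=> x; rewrite /= !in_itv /= => /andP[ux _]; rewrite /A /= in_itv /= => xu.
  by move: (le_trans ux xu); rewrite gerDl ler10.
by rewrite probability_setC// sube_gt0.
Qed.

Lemma probE (R : realType) {T : Type} (D : set T) (k : T -> T -> R) (sigma : R)
  (t : nat) (s : 'I_t -> T) (y : 'I_t -> R) (h : R)
  (dO : measure_display) (Omega : measurableType dO) (P : probability Omega R)
  (f : Omega -> T -> R)
  (hf : is_GP P D f (post_mean k sigma s y) (post_cov k sigma s))
  (z : T) (Dz : D z) (hsd : 0 < post_sd k sigma s z) :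
  P [set w | f w z < h] = (Phi_s k sigma s y h z)%:E.
Proof.
have := hf 1%N (fun _ => z) (fun _ => 1) (fun _ => Dz).
move=> [_ [_ Hp]].
rewrite !big_ord1 !mul1r in Hp.
have vpos : 0 < post_cov k sigma s z z by rewrite -sqrtr_gt0.
have := Hp vpos `]-oo, h[%classic (measurable_itv _).
rewrite (_ : _ @^-1` _ = [set w | f w z < h]); last first.
  by apply/seteqP; split => w /=; rewrite big_ord1 mul1r in_itv /=.
move=> ->; rewrite cdf_shift//.
Qed.


Lemma intMg (R : realType) d (T : measurableType d) (mu : {measure set T -> \bar R})
  (D : set T) (mD : measurable D) (a g : T -> R) (M : R) :
  mu.-integrable D (EFin \o g) -> measurable_fun D a ->
  (forall z, D z -> `|a z| <= M) ->
  mu.-integrable D (EFin \o (fun z => a z * g z)).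
Proof.
move=> ig ma aM.
have bnd : [bounded a z | z in D].
  exists M; split; first exact: num_real.
  by move=> N MN z Dz /=; rewrite (le_trans (aM z Dz))// ltW.
have := integrableMr mD ma bnd ig.
apply: eq_integrable => // z _ /=; by rewrite EFinM.
Qed.

Lemma int_bool (R : realType) dO (Omega : measurableType dO) (P : probability Omega R)
  (b : Omega -> bool) (mb : measurable [set w | b w]) (F : R -> R)
  (F0 : 0 <= F 0) (F1 : 0 <= F 1) :
  (\int[P]_w (F (b w)%:R)%:E = (F 1)%:E * P [set w | b w] + (F 0)%:E * P (~` [set w | b w]))%E.
Proof.
have -> : (fun w => (F (b w)%:R)%:E) =
   (fun w => (F 1)%:E * (\1_[set w | b w] w)%:E + (F 0)%:E * (\1_(~` [set w | b w]) w)%:E)%E.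
  apply/funext => w; rewrite !indicE; case: (boolP (b w)) => bw.
    by rewrite mem_set //= memNset /= ?bw// mule1 mule0 adde0.
  by rewrite memNset /= ?(negbTE bw)// mem_set /= ?(negbTE bw)// mule1 mule0 add0e.
have mC : measurable (~` [set w | b w]) by exact: measurableC.
rewrite ge0_integralD//; try (by move=> w _; rewrite mule_ge0 ?lee_fin);
  try (by apply: measurable_funeM; apply/measurable_EFinP; exact: measurable_indic).
rewrite !ge0_integralZl//; try (by move=> w _; rewrite lee_fin);
  try (by apply/measurable_EFinP; exact: measurable_indic).
by rewrite !integral_indic// !setIT.
Qed.

Lemma intD_R (R : realType) d (T : measurableType d) (mu : {measure set T -> \bar R})
  (D : set T) (mD : measurable D) (f1 f2 : T -> R) :
  mu.-integrable D (EFin \o f1) -> mu.-integrable D (EFin \o f2) ->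
  mu.-integrable D (EFin \o (fun z => f1 z + f2 z)).
Proof.
move=> i1 i2; have := integrableD mD i1 i2.
by apply: eq_integrable => // z _ /=; rewrite EFinD.
Qed.

Lemma intN_R (R : realType) d (T : measurableType d) (mu : {measure set T -> \bar R})
  (D : set T) (mD : measurable D) (f1 : T -> R) :
  mu.-integrable D (EFin \o f1) ->
  mu.-integrable D (EFin \o (fun z => - f1 z)).
Proof.
move=> i1; have := integrableN i1.
by apply: eq_integrable => // z _ /=; rewrite EFinN.
Qed.
Arguments intMg {R d T mu D} mD {a g M}.
Arguments intD_R {R d T mu D} mD {f1 f2}.
Arguments intN_R {R d T mu D} mD {f1}.


Theorem lemma1
  (R : realType)
  (* spatial domain D inside a sigma-finite measure space (T, mu) *)
  (d : measure_display) (T : measurableType d)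
  (mu : {measure set T -> \bar R}) (hmu : sigma_finite setT mu)
  (D : set T) (mD : measurable D)
  (* finite candidate set X, densities g(. | theta_x) on D, threshold h *)
  (X : set T) (finX : finite_set X) (XD : X `<=` D)
  (g : T -> T -> R)
  (hg : forall x, X x ->
     measurable_fun D (g x) /\ (forall z, D z -> 0 <= g x z) /\
     (\int[mu]_(z in D) (g x z)%:E = 1)%E)
  (h : R)
  (* GP prior kernel, noise level, data *)
  (k : T -> T -> R) (hk : psd_kernel_on D k)
  (sigma : R) (hsigma : 0 < sigma)
  (t : nat) (s : 'I_t -> T) (hs : forall j, D (s j)) (y : 'I_t -> R)
  (hsd : forall z, D z -> 0 < post_sd k sigma s z)
  (* f_t: a random function distributed as the GP posterior *)
  (dO : measure_display) (Omega : measurableType dO) (P : probability Omega R)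
  (f : Omega -> T -> R)
  (mf : measurable_fun setT (fun wz : Omega * T => f wz.1 wz.2))
  (hf : is_GP P D f (post_mean k sigma s y) (post_cov k sigma s))
  (delta : R) (hdelta : 0 < delta < 1)
  (x : T) (hx : X x) :
  ((1 - delta)%:E <=
   P [set w | (`| p_tx mu D f h (g x) w - mu_p mu D k sigma s y h (g x) |
              < (Num.sqrt delta)^-1 * gamma_t mu D k sigma s y h (g x))%R])%E.
Proof.
Proof.
have [mg [g0 g1]] := hg x hx.
set gx := g x in mg g0 g1 *.
set Phi := Phi_s k sigma s y h.
have PhiE z : D z -> P [set w | f w z < h] = (Phi z)%:E.
  by move=> Dz; exact: probE hf z Dz (hsd z Dz).
have Phi1 z : 0 < Phi z < 1 by exact: Phi01.
pose I w z : R := ((f w z < h)%R)%:R.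
pose A := [set wz : Omega * T | f wz.1 wz.2 < h].
have mA : measurable A.
  have -> : A = setT `&` (fun wz : Omega * T => f wz.1 wz.2) @^-1` `]-oo, h[%classic.
    by apply/seteqP; split => wz /=; rewrite in_itv /= => //; case.
  exact: mf measurableT _ (measurable_itv _).
have mI : measurable_fun setT (fun wz : Omega * T => I wz.1 wz.2).
  have -> : (fun wz : Omega * T => I wz.1 wz.2) = \1_A.
    apply/funext => wz; rewrite indicE /I; congr (_%:R).
    case: (boolP (f wz.1 wz.2 < h)%R) => H; first by rewrite mem_set.
    by rewrite memNset //=; apply/negP.
  exact: measurable_indic.
have mIw w : measurable_fun setT (I w).
  exact: (measurableT_comp mI (pair1_measurable w)).
have mBw z : measurable [set w | f w z < h].
  have mfz : measurable_fun setT (fun w => f w z) := measurableT_comp mf (pair2_measurable z).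
  have -> : [set w | f w z < h] = setT `&` (fun w => f w z) @^-1` `]-oo, h[%classic.
    by apply/seteqP; split => w /=; rewrite in_itv /= => //; case.
  exact: mfz measurableT _ (measurable_itv _).
have Iind z : I^~ z = \1_[set w | f w z < h].
  apply/funext => w; rewrite indicE /I; congr (_%:R).
  case: (boolP (f w z < h)%R) => H; first by rewrite mem_set.
  by rewrite memNset //=; apply/negP.
have mPhi : measurable_fun D Phi.
  apply/measurable_EFinP.
  have mIE : measurable_fun setT (EFin \o (fun wz : Omega * T => I wz.1 wz.2)).
    exact/measurable_EFinP.
  have I0 : forall wz, (0 <= (EFin \o (fun wz : Omega * T => I wz.1 wz.2)) wz)%E.
    by move=> wz; rewrite /= lee_fin /I ler0n.
  have mq := measurable_fun_fubini_tonelli_G (m1 := P) _ mIE I0.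
  apply: eq_measurable_fun (measurable_funTS mq) => z; rewrite inE => Dz.
  rewrite /fubini_G /= -PhiE// (_ : (fun w => (I w z)%:E) = (fun w => (\1_[set w | f w z < h] w)%:E)); last by rewrite -Iind.
  by rewrite integral_indic// setIT.
have ig : mu.-integrable D (EFin \o gx).
  apply/integrableP; split; first exact/measurable_EFinP.
  rewrite (eq_integral (fun z => (gx z)%:E)); first by rewrite g1 ltry.
  by move=> z; rewrite inE => Dz; rewrite /= ger0_norm ?g0.
have intB (a : T -> R) (M : R) : measurable_fun D a -> (forall z, D z -> `|a z| <= M) ->
    mu.-integrable D (EFin \o (fun z => a z * gx z)).
  by move=> ma aM; exact (intMg mD ig ma aM).
have Rg1 : \int[mu]_(z in D) gx z = 1 by rewrite /Rintegral g1.
have Ib w z : `|I w z| <= 1 by rewrite /I; case: (_ < _)%R; rewrite ?normr1 ?normr0.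
have Phib z : `|Phi z| <= 1.
  by have /andP[p0 p1] := Phi1 z; rewrite ger0_norm ?ltW.
have iP : mu.-integrable D (EFin \o (fun z => Phi z * gx z)) by exact: intB _ 1 mPhi (fun z _ => Phib z).
set c := mu_p mu D k sigma s y h gx.
pose p w := p_tx mu D f h gx w.
have stepC w : (p w - c) ^+ 2 <= \int[mu]_(z in D) ((I w z - Phi z) ^+ 2 * gx z).
  have mIwD : measurable_fun D (I w) := measurable_funTS (mIw w).
  have iI : mu.-integrable D (EFin \o (fun z => I w z * gx z)) by exact: intB _ 1 mIwD (fun z _ => Ib w z).
  pose a z := I w z - Phi z.
  have ma : measurable_fun D a := measurable_funB mIwD mPhi.
  have abnd z : D z -> `|a z| <= 1.
    move=> _; have /andP[p0 p1] := Phi1 z; rewrite /a /I.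
    by case: (_ < _)%R; rewrite ler_norml /= ?mulr1n ?mulr0n; apply/andP; split; lra.
  have iA := intB a 1 ma abnd.
  have meq : p w - c = \int[mu]_(z in D) (a z * gx z).
    rewrite /p /c /p_tx /mu_p -RintegralB//; apply: eq_Rintegral => z _.
    by rewrite /a mulrBl.
  set m := p w - c in meq *.
  have i1 : mu.-integrable D (EFin \o (fun z => (2 * m * a z) * gx z)).
    apply: (intB _ `|2 * m|); first exact: measurable_funM.
    by move=> z Dz; rewrite normrM ler_piMr// abnd.
  have i2 : mu.-integrable D (EFin \o (fun z => m ^+ 2 * gx z)).
    by apply: (intB _ `|m ^+ 2|) => //; exact: measurable_cst.
  have i3 : mu.-integrable D (EFin \o (fun z => (I w z - Phi z) ^+ 2 * gx z)).
    apply: (intB _ 1); first exact: measurable_funX.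
    by move=> z Dz; rewrite normrX expr_le1// abnd.
  have i12 := intD_R mD i1 (intN_R mD i2).
  have := @le_Rintegral _ _ _ mu D _ _ mD i12 i3.
  rewrite RintegralD// ?intN_R//.
  have E1 : \int[mu]_(z in D) (2 * m * a z * gx z) = 2 * m * m.
    rewrite (@eq_Rintegral _ _ _ mu D (fun z => 2 * m * (a z * gx z))); last by move=> z _; rewrite mulrA.
    by rewrite RintegralZl// -meq.
  have E2 : \int[mu]_(z in D) (- (m ^+ 2 * gx z)) = - m ^+ 2.
    rewrite (@eq_Rintegral _ _ _ mu D (fun z => (- m ^+ 2) * gx z)); last by move=> z _; rewrite mulNr.
    by rewrite RintegralZl// Rg1 mulr1.
  rewrite E1 E2.
  move=> H; apply: le_trans (H _); first by rewrite expr2; lra.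
  move=> z Dz; rewrite -mulNr -mulrDl ler_wpM2r ?g0//.
  rewrite -subr_ge0; have -> : (I w z - Phi z) ^+ 2 - (2 * m * a z + - m ^+ 2) = (a z - m) ^+ 2.
    by rewrite /a; ring.
  exact: sqr_ge0.
pose mu' : {sigma_finite_measure set T -> \bar R} :=
  HB.pack_for (sigma_finite_measure T R) (mu : set T -> \bar R) (Measure.class mu)
  (isSFinite.Build _ _ _ (mu : set T -> \bar R) (sfinite_measure_sigma_finite hmu))
  (isSigmaFinite.Build _ _ _ (mu : set T -> \bar R) hmu).
pose GD := gx \_ D.
pose PhiD := Phi \_ D.
have mGD : measurable_fun setT GD by exact: (measurable_restrictT _ mD).1 mg.
have mPhiD : measurable_fun setT PhiD by exact: (measurable_restrictT _ mD).1 mPhi.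
have GD0 z : 0 <= GD z by rewrite /GD patchE; case: ifPn => // /set_mem; exact: g0.
pose H1 (wz : Omega * T) := ((I wz.1 wz.2 * GD wz.2)%:E).
pose H2 (wz : Omega * T) := (((I wz.1 wz.2 - PhiD wz.2) ^+ 2 * GD wz.2)%:E).
have mH1 : measurable_fun setT H1.
  apply/measurable_EFinP; apply: measurable_funM => //.
  exact: measurableT_comp mGD measurable_snd.
have mH2 : measurable_fun setT H2.
  apply/measurable_EFinP; apply: measurable_funM => //; last first.
    exact: measurableT_comp mGD measurable_snd.
  apply: measurable_funX; apply: measurable_funB => //.
  exact: measurableT_comp mPhiD measurable_snd.
have H10 wz : (0 <= H1 wz)%E by rewrite lee_fin mulr_ge0// /I ler0n.
have H20 wz : (0 <= H2 wz)%E by rewrite lee_fin mulr_ge0// sqr_ge0.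
have pE w : p w = fine (\int[mu']_z H1 (w, z)).
  rewrite /p /p_tx /Rintegral integral_mkcond; congr fine; apply: eq_integral => z _.
  by rewrite /H1 /GD /= !patchE; case: ifPn => //; rewrite mulr0.
have mp : measurable_fun setT p.
  rewrite (_ : p = fine \o fubini_F mu' H1); last by apply/funext => w; rewrite pE.
  apply: measurableT_comp; first exact: fine_measurable.
  exact: measurable_fun_fubini_tonelli_F.
have abnd0 w z : `|I w z - Phi z| <= 1.
  have /andP[p0 p1] := Phi1 z; rewrite /I.
  by case: (_ < _)%R; rewrite ler_norml /= ?mulr1n ?mulr0n; apply/andP; split; lra.
have i3 w : mu.-integrable D (EFin \o (fun z => (I w z - Phi z) ^+ 2 * gx z)).
  apply: (intB _ 1).
    by apply: measurable_funX; apply: measurable_funB => //; exact: measurable_funTS (mIw w).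
  by move=> z Dz; rewrite normrX expr_le1.
have H2E w : (\int[mu']_z H2 (w, z) = \int[mu]_(z in D) (((I w z - Phi z) ^+ 2 * gx z))%:E)%E.
  rewrite [RHS]integral_mkcond; apply: eq_integral => z _.
  by rewrite /H2 /GD /PhiD /= !patchE; case: ifPn => //; rewrite mulr0.
have iG : mu.-integrable D (EFin \o (fun z => Phi z * (1 - Phi z) * gx z)).
  apply: (intB _ 1); first by apply: measurable_funM => //; apply: measurable_funB.
  move=> z _; have /andP[p0 p1] := Phi1 z.
  rewrite ger0_norm ?mulr_ge0 ?subr_ge0 ?ltW//.
  by nra.
have stepD : (\int[P]_w ((p w - c) ^+ 2)%:E <= (gamma_t mu D k sigma s y h gx ^+ 2)%:E)%E.
  apply: (@le_trans _ _ (\int[P]_w \int[mu']_z H2 (w, z))%E).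
    apply: ge0_le_integral => //.
    - by move=> w _; rewrite lee_fin sqr_ge0.
    - by apply/measurable_EFinP; apply: measurable_funX; apply: measurable_funB.
    - exact: measurable_fun_fubini_tonelli_F.
    - move=> w _; rewrite H2E -(fineK (integrable_fin_num mD (i3 w))) lee_fin.
      exact: stepC.
  rewrite (fubini_tonelli H2 mH2 H20) /=.
  rewrite (eq_integral ((fun z => (Phi z * (1 - Phi z) * gx z)%:E) \_ D)); last first.
    move=> z _; rewrite patchE; case: ifPn => [/set_mem Dz|Dz].
      have HH w : H2 (w, z) = ((fun r => (r - Phi z) ^+ 2 * gx z) ((f w z < h)%R)%:R)%:E.
        by rewrite /H2 /GD /PhiD /= !patchE mem_set.
      under eq_integral => w _ do rewrite HH.
      have := @int_bool _ _ _ P (fun w => (f w z < h)%R) (mBw z)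
        (fun r => (r - Phi z) ^+ 2 * gx z).
      rewrite /= => ->; try by rewrite mulr_ge0 ?sqr_ge0 ?g0.
      rewrite probability_setC ?mBw// PhiE//.
      rewrite -EFinB -!EFinM -EFinD; congr EFin; ring.
    rewrite (eq_integral (fun _ => 0%E)); first exact: integral0.
    by move=> w _; rewrite /H2 /GD patchE (negbTE Dz) mulr0.
  rewrite /gamma_t sqr_sqrtr; last first.
    apply: Rintegral_ge0 => z Dz; have /andP[p0 p1] := Phi1 z.
    by rewrite mulr_ge0 ?g0// mulr_ge0 ?subr_ge0 ?ltW.
  rewrite /Rintegral fineK; last by apply: integrable_fin_num => //; exact: iG.
  by rewrite [leRHS]integral_mkcond.
have PP0 z : 0 < Phi z * (1 - Phi z).
  by have /andP[p0 p1] := Phi1 z; rewrite mulr_gt0 ?subr_gt0.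
have gpos : 0 < gamma_t mu D k sigma s y h gx.
  rewrite /gamma_t sqrtr_gt0 lt_neqAle; apply/andP; split; last first.
    by apply: Rintegral_ge0 => z Dz; rewrite mulr_ge0 ?g0 ?ltW.
  apply/negP => /eqP H0.
  have J0 : (\int[mu]_(z in D) (Phi z * (1 - Phi z) * gx z)%:E = 0)%E.
    have := integrable_fin_num mD iG; rewrite /= => /fineK <-.
    by rewrite /Rintegral in H0; rewrite -H0.
  have mJ : measurable_fun D (EFin \o (fun z => Phi z * (1 - Phi z) * gx z)).
    by apply/measurable_EFinP; apply: measurable_funM => //; apply: measurable_funM => //; apply: measurable_funB.
  have ae : ae_eq mu D (EFin \o (fun z => Phi z * (1 - Phi z) * gx z)) (cst 0%E).
    apply/(ae_eq_integral_abs mu mD mJ); rewrite -J0; apply: eq_integral => z.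
    by rewrite inE => Dz; apply: gee0_abs; rewrite /= lee_fin mulr_ge0 ?g0 ?ltW. 
  have ae2 : ae_eq mu D (EFin \o gx) (cst 0%E).
    apply: filterS ae => z H Dz; have := H Dz; rewrite /= => -[].
    by move/eqP; rewrite mulf_eq0 (gt_eqF (PP0 z)) /= => /eqP ->.
  have mgE : measurable_fun D (EFin \o gx) by exact/measurable_EFinP.
  have := ae_eq_integral (cst 0%E) (EFin \o gx) mD mgE (measurable_cst _) ae2.
  by rewrite g1 integral0 => /eqP; rewrite onee_eq0.
set gam := gamma_t mu D k sigma s y h gx in stepD gpos *.
have /andP[d0 d1] := hdelta.
set r := (Num.sqrt delta)^-1 * gam.
have sd0 : 0 < Num.sqrt delta by rewrite sqrtr_gt0.
have r0 : 0 < r by rewrite mulr_gt0 ?invr_gt0.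
have gamE : gam ^+ 2 = delta * r ^+ 2.
  by rewrite /r exprMn exprVn (@sqr_sqrtr _ delta) ?ltW//; field; rewrite gt_eqF.
pose B := [set w | r <= `|p w - c|].
have mB : measurable B.
  have mpc : measurable_fun setT (fun w => `|p w - c|).
    by apply: measurableT_comp => //; apply: measurable_funB.
  have -> : B = setT `&` (fun w => `|p w - c|) @^-1` `[r, +oo[%classic.
    by apply/seteqP; split => w /=; rewrite in_itv /= ?andbT => //; case.
  exact: mpc measurableT _ (measurable_itv _).
have PBfin : P B \is a fin_num.
  by rewrite ge0_fin_numE ?measure_ge0// (le_lt_trans (probability_le1 P mB)) ?ltry.
have H : ((r ^+ 2)%:E * P B <= (gam ^+ 2)%:E)%E.
  apply: le_trans stepD.
  have -> : P B = (\int[P]_w (\1_B w)%:E)%E by rewrite integral_indic// setIT.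
  rewrite -ge0_integralZl//; try (by apply/measurable_EFinP; exact: measurable_indic);
    try (by move=> w _; rewrite lee_fin); try (by rewrite lee_fin sqr_ge0).
  apply: ge0_le_integral => //.
  - by move=> w _; rewrite mule_ge0 ?lee_fin ?sqr_ge0.
  - by apply: measurable_funeM; apply/measurable_EFinP; exact: measurable_indic.
  - by apply/measurable_EFinP; apply: measurable_funX; apply: measurable_funB.
  move=> w _; rewrite indicE -EFinM lee_fin; case: (boolP (w \in B)) => wB; last by rewrite mulr0 sqr_ge0.
  rewrite mulr1; move: wB; rewrite inE /= => rB.
  rewrite -[leRHS]real_normK ?num_real// lerXn2r// ?nnegrE ?ltW//.
have PBle : (P B <= delta%:E)%E.
  move: H; rewrite -(fineK PBfin) gamE -EFinM !lee_fin => H.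
  have r20 : 0 < r ^+ 2 by rewrite exprn_gt0.
  by rewrite -(ler_pM2l r20) (mulrC (r ^+ 2) delta).
have -> : [set w | `|p_tx mu D f h gx w - c| < r] = ~` B.
  apply/seteqP; split => w /=.
    by move=> Hlt; apply/negP; rewrite -ltNge.
  by move/negP; rewrite -ltNge.
rewrite probability_setC//.
move: PBle; rewrite -(fineK PBfin) !lee_fin => qd.
by rewrite lerD2l lerN2.
Qed.
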